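(* Let $v_1,\dots,v_m\in\mathbb{Q}^n$ and $P=P_{v_1,\dots,v_m}$. Let $w\in\sum_{i=1}^m\mathbb{Q}_Pv_i$, and suppose there exist a natural number $k$ none of whose prime factors lies in $P$ and a subset $I\subseteq\{1,\dots,m\}$ such that $kw\in\sum_{i\in I}\mathbb{Q}_Pv_i$. Then $w\in\sum_{i\in I}\mathbb{Q}_Pv_i$.
   Context: An elementary integral relation among $v_1,\dots,v_m$ is a relation $\sum_{i=1}^m a_iv_i=0$ with $a_i\in\mathbb{Z}$ not all zero, whose support $\{i:a_i\neq0\}$ is minimal (inclusion-wise) among supports of nontrivial linear relations, and whose coefficients have greatest common divisor $1$. $P_{v_1,\dots,v_m}$ is the (finite) set of primes $p$ for which there exists an elementary integral relation $\sum a_iv_i=0$ with $p\mid\prod_{a_i\neq0}a_i$. For a set of primes $P$, $\mathbb{Q}_P=\{a/b: a,b\in\mathbb{Z},\ b\neq0,\ \text{all prime factors of } b \text{ lie in } P\}$ (so $\mathbb{Q}_\emptyset=\mathbb{Z}$). *)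

(* Defs.v *)
From HB Require Import structures.
From mathcomp Require Import all_boot all_order all_algebra.
Set Implicit Arguments. Unset Strict Implicit. Unset Printing Implicit Defensive.
Import Order.TTheory GRing.Theory Num.Theory.
Local Open Scope ring_scope.

Definition supp (m : nat) (c : 'I_m -> rat) : {set 'I_m} := [set i | c i != 0].

Definition nontriv_rel (m n : nat) (v : 'I_m -> 'rV[rat]_n) (c : 'I_m -> rat) : Prop :=
  (\sum_(i < m) c i *: v i = 0) /\ (exists i, c i != 0).

Definition intQ (m : nat) (a : 'I_m -> int) : 'I_m -> rat := fun i => (a i)%:~R.

Definition elementary_rel (m n : nat) (v : 'I_m -> 'rV[rat]_n) (a : 'I_m -> int) : Prop :=
  nontriv_rel v (intQ a) /\
  (forall c : 'I_m -> rat, nontriv_rel v c ->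
      supp c \subset supp (intQ a) -> supp c = supp (intQ a)) /\
  (\big[gcdn/0%N]_(i < m) `|a i|%N = 1%N).

Definition Pv (m n : nat) (v : 'I_m -> 'rV[rat]_n) (p : nat) : Prop :=
  prime p /\ exists a : 'I_m -> int,
    elementary_rel v a /\ (p %| \prod_(i < m | a i != 0) `|a i|%N)%N.

Definition QP (P : nat -> Prop) (q : rat) : Prop :=
  exists (a b : int), b != 0 /\
    (forall p : nat, prime p -> (p %| `|b|%N)%N -> P p) /\ q = a%:~R / b%:~R.

Definition in_QP_span (P : nat -> Prop) (m n : nat) (v : 'I_m -> 'rV[rat]_n)
    (I : {set 'I_m}) (w : 'rV[rat]_n) : Prop :=
  exists c : 'I_m -> rat, (forall i, i \in I -> QP P (c i)) /\
    w = \sum_(i in I) c i *: v i.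

(* Main.v *)
Require Import Defs.
From HB Require Import structures.
From mathcomp Require Import all_boot all_order all_algebra.
From mathcomp Require Import ring zify.
From Stdlib Require Import Classical.
Set Implicit Arguments. Unset Strict Implicit. Unset Printing Implicit Defensive.
Import Order.TTheory GRing.Theory Num.Theory.
Local Open Scope ring_scope.

Lemma QP0 (P : nat -> Prop) : QP P 0.
Proof. exists 0, 1; split => //; split; first by move=> p pp; rewrite dvdn1 => /eqP p1; rewrite p1 in pp.
by rewrite mul0r. Qed.

Lemma QP1 (P : nat -> Prop) : QP P 1.
Proof. exists 1, 1; split => //; split; first by move=> p pp; rewrite dvdn1 => /eqP p1; rewrite p1 in pp.
by rewrite divr1. Qed.

Lemma QPadd (P : nat -> Prop) x y : QP P x -> QP P y -> QP P (x + y).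
Proof.
move=> [a1 [b1 [b10 [h1 ->]]]] [a2 [b2 [b20 [h2 ->]]]].
exists (a1 * b2 + a2 * b1), (b1 * b2); split; first by rewrite mulf_neq0.
split; first by move=> p pp; rewrite abszM Euclid_dvdM // => /orP [/h1|/h2]; apply.
have b1' : (b1%:~R : rat) != 0 by rewrite intr_eq0.
have b2' : (b2%:~R : rat) != 0 by rewrite intr_eq0.
rewrite intrD !intrM; field; by rewrite b1' b2'.
Qed.

Lemma QPmul (P : nat -> Prop) x y : QP P x -> QP P y -> QP P (x * y).
Proof.
move=> [a1 [b1 [b10 [h1 ->]]]] [a2 [b2 [b20 [h2 ->]]]].
exists (a1 * a2), (b1 * b2); split; first by rewrite mulf_neq0.
split; first by move=> p pp; rewrite abszM Euclid_dvdM // => /orP [/h1|/h2]; apply.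
have b1' : (b1%:~R : rat) != 0 by rewrite intr_eq0.
have b2' : (b2%:~R : rat) != 0 by rewrite intr_eq0.
rewrite !intrM; field; by rewrite b1' b2'.
Qed.

Definition indep m n (v : 'I_m -> 'rV[rat]_n) (S : {set 'I_m}) :=
  forall c : 'I_m -> rat, (forall i, i \notin S -> c i = 0) ->
    \sum_i c i *: v i = 0 -> forall i, c i = 0.

Definition spanS m n (v : 'I_m -> 'rV[rat]_n) (Q : rat -> Prop) (S : {set 'I_m}) u :=
  exists x : 'I_m -> rat, (forall i, i \notin S -> x i = 0) /\ (forall i, Q (x i)) /\
    u = \sum_i x i *: v i.

Lemma span0 m n (v : 'I_m -> 'rV[rat]_n) Q S : Q 0 -> spanS v Q S 0.
Proof. move=> Q0; exists (fun=> 0); split=> //; split=> //.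
by rewrite big1 // => i _; rewrite scale0r. Qed.

Lemma spanD m n (v : 'I_m -> 'rV[rat]_n) (Q : rat -> Prop) S u1 u2 :
  (forall x y, Q x -> Q y -> Q (x + y)) -> spanS v Q S u1 -> spanS v Q S u2 -> spanS v Q S (u1 + u2).
Proof.
move=> QD [x1 [s1 [q1 ->]]] [x2 [s2 [q2 ->]]].
exists (fun i => x1 i + x2 i); split; first by move=> i iS; rewrite s1 // s2 // addr0.
split; first by move=> i; apply: QD.
by rewrite -big_split /=; apply: eq_bigr => i _; rewrite scalerDl.
Qed.

Lemma spanZ m n (v : 'I_m -> 'rV[rat]_n) (Q : rat -> Prop) S a u :
  (forall x y, Q x -> Q y -> Q (x * y)) -> Q a -> spanS v Q S u -> spanS v Q S (a *: u).
Proof.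
move=> QM Qa [x [s [q ->]]].
exists (fun i => a * x i); split; first by move=> i iS; rewrite s // mulr0.
split; first by move=> i; apply: QM.
by rewrite scaler_sumr; apply: eq_bigr => i _; rewrite scalerA.
Qed.

Lemma sum_ind m n (v : 'I_m -> 'rV[rat]_n) j :
  \sum_i (if i == j then 1 else 0) *: v i = v j.
Proof.
by rewrite (bigD1 j) //= eqxx scale1r big1 ?addr0 // => i /negbTE ->; rewrite scale0r.
Qed.

Lemma spanV m n (v : 'I_m -> 'rV[rat]_n) (Q : rat -> Prop) (S : {set 'I_m}) j :
  Q 0 -> Q 1 -> j \in S -> spanS v Q S (v j).
Proof.
move=> Q0 Q1 jS; exists (fun i => if i == j then 1 else 0); split.
  by move=> i iS; case: eqP => // ij; rewrite ij jS in iS.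
split; first by move=> i; case: eqP.
by rewrite sum_ind.
Qed.

Lemma normalize m (c : 'I_m -> rat) j : c j != 0 ->
  exists (a : 'I_m -> int) (l : rat), l != 0 /\ (forall i, (a i)%:~R = l * c i) /\
    \big[gcdn/0%N]_(i < m) `|a i|%N = 1%N.
Proof.
move=> cj.
pose D := \prod_(i < m) denq (c i).
pose a' := fun i => numq (c i) * \prod_(k < m | k != i) denq (c k).
have D0 : (D%:~R : rat) != 0.
  by rewrite intr_eq0 gt_eqF // prodr_gt0 // => i _; apply: denq_gt0.
have Ha' : forall i, ((a' i)%:~R : rat) = D%:~R * c i.
  move=> i; rewrite /a' /D [in RHS](bigD1 i) //= !intrM.
  rewrite numqE.
  have d0 : ((denq (c i))%:~R : rat) != 0 by rewrite intr_eq0 denq_neq0.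
  by field.
pose g := \big[gcdn/0%N]_(i < m) `|a' i|%N.
have Hdvd : forall i, (g %| `|a' i|)%N by move=> i; rewrite /g (bigD1 i) //= dvdn_gcdl.
have a'j : a' j != 0.
  by rewrite -(intr_eq0 rat) Ha' mulf_neq0.
have g0 : (0 < g)%N.
  rewrite lt0n; apply/negP => /eqP g0; have := Hdvd j; rewrite g0 dvd0n absz_eq0.
  by rewrite (negbTE a'j).
pose a := fun i => (a' i %/ g%:Z)%Z.
have Hdec : forall i, a' i = a i * g%:Z.
  by move=> i; rewrite divzK // dvdzE absz_nat.
have Hg : g = ((\big[gcdn/0%N]_(i < m) `|a i|%N) * g)%N.
  rewrite (big_morph (fun x => x * g)%N (fun x y => muln_gcdl x y g) (mul0n g)) /g.
  by apply: eq_bigr => i _; rewrite {1}Hdec abszM absz_nat.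
exists a, (D%:~R / g%:R); split.
  by rewrite mulf_neq0 // invr_eq0 pnatr_eq0 -lt0n.
split.
  move=> i; have g0' : (g%:R : rat) != 0 by rewrite pnatr_eq0 -lt0n.
  have := Ha' i; rewrite Hdec intrM => h.
  have gg : ((g%:Z)%:~R : rat) = g%:R by [].
  rewrite gg in h; apply: (mulIf g0'); rewrite h; by field.
have : (1 * g = (\big[gcdn/0%N]_(i < m) `|a i|%N) * g)%N by rewrite mul1n -Hg.
by move/eqP; rewrite eqn_pmul2r // => /eqP <-.
Qed.

Lemma circuit m n (v : 'I_m -> 'rV[rat]_n) (S : {set 'I_m}) j r :
  indep v S -> j \notin S -> (forall i, i \notin S -> r i = 0) ->
  v j = \sum_i r i *: v i -> forall s, QP (Pv v) (r s).
Proof.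
move=> hS jS rS hv.
pose c := fun i => (if i == j then 1 else 0) - r i.
have cj : c j = 1 by rewrite /c eqxx (rS j jS) subr0.
have csum : \sum_i c i *: v i = 0.
  rewrite /c; under eq_bigr do rewrite scalerBl.
  by rewrite sumrB sum_ind -hv subrr.
have cout : forall i, i \notin S -> i != j -> c i = 0.
  by move=> i iS ij; rewrite /c (negbTE ij) rS // subrr.
have prop : forall c' : 'I_m -> rat, \sum_i c' i *: v i = 0 ->
    (forall i, c i = 0 -> c' i = 0) -> forall i, c' i = c' j * c i.
  move=> c' s' sup i.
  pose d := fun i => c' i - c' j * c i.
  have : forall i, d i = 0.
    apply: hS.
    - move=> i0 i0S; rewrite /d; case: (eqVneq i0 j) => [->|i0j].
        by rewrite cj mulr1 subrr.
      by rewrite (cout _ i0S i0j) (sup _ (cout _ i0S i0j)) mulr0 subrr.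
    - rewrite /d; under eq_bigr do rewrite scalerBl -scalerA.
      by rewrite sumrB -scaler_sumr csum s' scaler0 subrr.
  by move=> /(_ i); rewrite /d => /eqP; rewrite subr_eq0 => /eqP.
have cj0 : c j != 0 by rewrite cj oner_neq0.
have [a [l [l0 [ha hg]]]] := normalize cj0.
have aj : (a j)%:~R = l by rewrite ha cj mulr1.
have aj0 : a j != 0 by rewrite -(intr_eq0 rat) aj.
have suppa : supp (intQ a) = supp c.
  by apply/setP => i; rewrite !inE /intQ ha mulf_eq0 negb_or l0.
have elem : elementary_rel v a.
  split; [split|split].
  - rewrite /intQ; under eq_bigr do rewrite ha -scalerA.
    by rewrite -scaler_sumr csum scaler0.
  - by exists j; rewrite /intQ ha cj mulr1.
  - move=> c' [s' [i0 ci0]] sub; rewrite suppa in sub *.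
    have sup : forall i, c i = 0 -> c' i = 0.
      move=> i ci; apply/eqP; apply: contraT => ci'.
      have := subsetP sub i; rewrite !inE ci' ci eqxx => /(_ isT); done.
    have hp := prop c' s' sup.
    have c'j : c' j != 0.
      by apply: contraNneq ci0 => c'j0; rewrite hp c'j0 mul0r.
    by apply/setP=> i; rewrite !inE hp mulf_eq0 negb_or c'j.
  - exact hg.
move=> s; case: (eqVneq s j) => [->|sj]; first by rewrite (rS j jS); apply: QP0.
have rs : r s = - c s by rewrite /c (negbTE sj) sub0r opprK.
exists (- a s), (a j); split => //.
split.
  move=> p pp pdiv; split => //; exists a; split => //.
  rewrite (bigD1 j) //=; exact: dvdn_trans pdiv (dvdn_mulr _ _).
by rewrite rs aj intrN ha; field.
Qed.

Lemma nomore m n (v : 'I_m -> 'rV[rat]_n) (T S0 : {set 'I_m}) :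
  indep v S0 ->
  ~ (exists j, j \in T /\ j \notin S0 /\ indep v (j |: S0)) ->
  forall j, j \in T -> spanS v (fun=> True) S0 (v j).
Proof.
move=> ind no j jT.
case: (boolP (j \in S0)) => jS; first exact: spanV.
apply: NNPP => Hno; apply: no; exists j; split => //; split => //.
move=> c csupp csum i.
case: (eqVneq (c j) 0) => cj.
  apply: ind csum i => i0 i0S; case: (eqVneq i0 j) => [->//|i0j].
  by apply: csupp; rewrite in_setU1 negb_or i0j.
exfalso; apply: Hno.
exists (fun i => (if i == j then 1 else 0) - c i / c j); split; [|split] => //.
  move=> i0 i0S; case: (eqVneq i0 j) => [->|i0j]; first by rewrite divff // subrr.
  by rewrite csupp ?mul0r ?subrr // in_setU1 negb_or i0j.
under eq_bigr do rewrite scalerBl mulrC -scalerA.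
by rewrite sumrB sum_ind -scaler_sumr csum scaler0 subr0.
Qed.

Lemma extend m n (v : 'I_m -> 'rV[rat]_n) (T S0 : {set 'I_m}) :
  S0 \subset T -> indep v S0 -> exists S : {set 'I_m}, [/\ S0 \subset S, S \subset T, indep v S &
     forall j, j \in T -> spanS v (fun=> True) S (v j)].
Proof.
have [N hN] : exists N, (#|T :\: S0| <= N)%N by exists #|T :\: S0|.
move: hN; elim: N S0 => [|N IH] S0 hN sub ind.
  exists S0; split => //; apply: nomore ind _ => -[j [jT [jS _]]].
  have : j \in T :\: S0 by rewrite inE jS jT.
  move=> jin; suff : (0 < #|T :\: S0|)%N by rewrite lt0n -leqn0 hN.
  by apply/card_gt0P; exists j.
case: (classic (exists j, j \in T /\ j \notin S0 /\ indep v (j |: S0))) => [[j [jT [jS ind']]]|no].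
  have lt : (#|T :\: (j |: S0)| < #|T :\: S0|)%N.
    apply: proper_card; apply/properP; split; first by apply: setDS; apply: subsetUr.
    by exists j; rewrite !inE ?eqxx ?jS ?jT.
  have : (#|T :\: (j |: S0)| <= N)%N by rewrite -ltnS; apply: leq_trans lt hN.
  move=> hN'; have sub' : j |: S0 \subset T by rewrite subUset sub1set jT sub.
  have [S' [s1' s2' s3' s4']] := IH (j |: S0) hN' sub' ind'.
  exists S'; split => //; apply: subset_trans s1'; apply: subsetUr.
exists S0; split => //; exact: nomore.
Qed.

Lemma indep0 m n (v : 'I_m -> 'rV[rat]_n) : indep v set0.
Proof. by move=> c h _ i; apply: h; rewrite inE. Qed.

Theorem mainTheorem5 (m n : nat) (v : 'I_m -> 'rV[rat]_n) (w : 'rV[rat]_n)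
    (k : nat) (I : {set 'I_m}) :
  in_QP_span (Pv v) v setT w ->
  (0 < k)%N ->
  (forall p : nat, prime p -> (p %| k)%N -> ~ Pv v p) ->
  in_QP_span (Pv v) v I (k%:R *: w) ->
  in_QP_span (Pv v) v I w.
Proof.
move=> [c [hc hw]] k0 _ [d [_ hkw]].
have [S1 [_ S1I ind1 sp1]] := extend (sub0set I) (@indep0 _ _ v).
have [S [S1S _ indS spS]] := extend (subsetT S1) ind1.
have spQP : forall j, spanS v (QP (Pv v)) S (v j).
  move=> j; have [r [rS [_ hr]]] := spS j (in_setT j).
  case: (boolP (j \in S)) => jS; first by apply: spanV => //; [apply: QP0|apply: QP1].
  exists r; split => //; split => //; exact: circuit indS jS rS hr.
have [x [xS [xQ hx]]] : spanS v (QP (Pv v)) S w.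
  rewrite hw; apply: (big_ind (spanS v (QP (Pv v)) S)).
  - by apply: span0; apply: QP0.
  - by move=> u1 u2; apply: spanD; apply: QPadd.
  - by move=> i iT; apply: spanZ; [apply: QPmul|apply: hc|apply: spQP].
have [y [yS [_ hy]]] : spanS v (fun=> True) S1 (k%:R *: w).
  rewrite hkw; apply: (big_ind (spanS v (fun=> True) S1)).
  - exact: span0.
  - by move=> u1 u2; apply: spanD.
  - by move=> i iI; apply: spanZ => //; apply: sp1.
have z0 := indS (fun i => k%:R * x i - y i).
have xy : forall i, k%:R * x i = y i.
  move=> i; apply/eqP; rewrite -subr_eq0; apply/eqP; apply: z0.
  - move=> i0 i0S; rewrite xS // yS ?mulr0 ?subrr //.
    by apply: contra i0S; apply: (subsetP S1S).
  - under eq_bigr do rewrite scalerBl -scalerA.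
    by rewrite sumrB -scaler_sumr -hx -hy subrr.
have xS1 : forall i, i \notin S1 -> x i = 0.
  move=> i iS1; have := xy i; rewrite yS // => /eqP; rewrite mulf_eq0 pnatr_eq0 (gtn_eqF k0) /=.
  by move/eqP.
exists x; split; first by move=> i _; apply: xQ.
rewrite hx [RHS]big_mkcond /=; apply: eq_bigr => i _; case: ifP => // iI.
rewrite xS1 ?scale0r //; apply: contraFN iI; apply: (subsetP S1I).
Qed.
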